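(* Let $W\in\mathbb{R}^{n\times n}$ be symmetric with nonnegative entries, $L=\operatorname{diag}(W\mathbf{1})-W$, and let $L=V^T\Lambda V$ be a full spectral decomposition with $V$ orthogonal, $\Lambda=\operatorname{diag}(\lambda_1,\dots,\lambda_n)$, $\lambda_1\le\dots\le\lambda_n$, and first row $V_1=\frac{1}{\sqrt n}\mathbf{1}^T$. Define the virtual data $\tilde A=(\lambda_nI-\Lambda)^{1/2}V$ and its mean-removed version $\bar A=\tilde A(I-\frac1n\mathbf{1}\mathbf{1}^T)$. Let $r\ge 2$. Then the three problems $$\text{(i)}\ \min_{\tilde X}\operatorname{tr}\{XLX^T\}\ \text{s.t. } X=\begin{bmatrix}\tfrac{1}{\sqrt n}\mathbf{1}^T\\ \tilde X\end{bmatrix}\in\mathbb{R}^{r\times n},\ XX^T=I;$$ $$\text{(ii)}\ \min_{D,\tilde X}\|\tilde A-DX\|_F^2\ \text{s.t. } X=\begin{bmatrix}\tfrac{1}{\sqrt n}\mathbf{1}^T\\ \tilde X\end{bmatrix},\ XX^T=I;$$ $$\text{(iii)}\ \min_{D,\tilde X}\|\bar A-D\tilde X\|_F^2\ \text{s.t. } \tilde X\tilde X^T=I$$ (with $\tilde X\in\mathbb{R}^{(r-1)\times n}$) have equal solutions $\tilde X$, one of which is $V_{2:r}$ (rows $2$ through $r$ of $V$).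
   Context: $\mathbf{1}$ is the all-ones vector, $\operatorname{diag}(v)$ the diagonal matrix with diagonal $v$; $L$ is the graph Laplacian of the similarity matrix $W$. *)

(* Defs.v *)
From HB Require Import structures.
From mathcomp Require Import all_boot all_order all_algebra.
From mathcomp Require Import reals.
Set Implicit Arguments. Unset Strict Implicit. Unset Printing Implicit Defensive.
Import Order.TTheory GRing.Theory Num.Theory.
Local Open Scope ring_scope.

Section Defs.
Variable R : realType.

Definition ones n : 'cV[R]_n := const_mx 1.

Definition laplacian n (W : 'M[R]_n) : 'M[R]_n :=
  diag_mx (W *m ones n)^T - W.

Definition orthogonal_mx n (V : 'M[R]_n) : Prop := V^T *m V = 1%:M.

Definition frob2 m n (A : 'M[R]_(m, n)) : R := \sum_i \sum_j (A i j) ^+ 2.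

Definition unit_ones_row n : 'rV[R]_n := const_mx (Num.sqrt (n%:R))^-1.

Definition stackX k n (Xt : 'M[R]_(k, n)) : 'M[R]_(1 + k, n) :=
  col_mx (unit_ones_row n) Xt.

Definition feas12 k n (Xt : 'M[R]_(k, n)) : Prop :=
  stackX Xt *m (stackX Xt)^T = 1%:M.

Definition sol_i k n (L : 'M[R]_n) (Xt : 'M[R]_(k, n)) : Prop :=
  feas12 Xt /\
  forall Y : 'M[R]_(k, n), feas12 Y ->
    \tr (stackX Xt *m L *m (stackX Xt)^T) <= \tr (stackX Y *m L *m (stackX Y)^T).

Definition sol_ii k n (At : 'M[R]_n) (Xt : 'M[R]_(k, n)) : Prop :=
  feas12 Xt /\
  exists D : 'M[R]_(n, 1 + k),
    forall (D' : 'M[R]_(n, 1 + k)) (Y : 'M[R]_(k, n)), feas12 Y ->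
      frob2 (At - D *m stackX Xt) <= frob2 (At - D' *m stackX Y).

Definition sol_iii k n (Ab : 'M[R]_n) (Xt : 'M[R]_(k, n)) : Prop :=
  Xt *m Xt^T = 1%:M /\
  exists D : 'M[R]_(n, k),
    forall (D' : 'M[R]_(n, k)) (Y : 'M[R]_(k, n)), Y *m Y^T = 1%:M ->
      frob2 (Ab - D *m Xt) <= frob2 (Ab - D' *m Y).

(* virtual data At = (lambda_n I - Lambda)^{1/2} V, with lam indexed 0..n *)
Definition virtual_data n (lam : 'rV[R]_n.+1) (V : 'M[R]_n.+1) : 'M[R]_n.+1 :=
  diag_mx (\row_i Num.sqrt (lam 0 ord_max - lam 0 i)) *m V.

Definition mean_removed n (A : 'M[R]_n) : 'M[R]_n :=
  A *m (1%:M - (n%:R)^-1 *: (ones n *m (ones n)^T)).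

(* rows 2..r of V (1-indexed), i.e. rows 1..r-1 (0-indexed) *)
Definition rows_2_to_r n (r : nat) (V : 'M[R]_n.+1) : 'M[R]_(r.-1, n.+1) :=
  \matrix_(i < r.-1, j < n.+1) V (inord i.+1) j.

End Defs.

(* Main.v *)
Require Import Defs.
From HB Require Import structures.
From mathcomp Require Import all_boot all_order all_algebra.
From mathcomp Require Import reals.
From mathcomp Require Import ring lra zify.
Import Order.TTheory GRing.Theory Num.Theory.
Local Open Scope ring_scope.
Set Implicit Arguments. Unset Strict Implicit. Unset Printing Implicit Defensive.
Section Gen.
Variable R : realType.

Lemma frob2_tr m n (B : 'M[R]_(m,n)) : frob2 B = \tr (B *m B^T).
Proof.
rewrite /frob2 /mxtrace; apply: eq_bigr => i _; rewrite !mxE.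
by apply: eq_bigr => j _; rewrite !mxE expr2.
Qed.

Lemma frob2_ge0 m n (B : 'M[R]_(m,n)) : 0 <= frob2 B.
Proof. by apply: sumr_ge0 => i _; apply: sumr_ge0 => j _; apply: sqr_ge0. Qed.

Lemma frob2_decomp m n k (A : 'M[R]_(m,n)) (D : 'M[R]_(m,k)) (Y : 'M[R]_(k,n)) :
  Y *m Y^T = 1%:M ->
  frob2 (A - D *m Y) = frob2 A - frob2 (A *m Y^T) + frob2 (D - A *m Y^T).
Proof.
move=> hY; rewrite !frob2_tr !linearB /= ?mulmxBl ?mulmxBr ?linearB /=.
rewrite ?trmx_mul ?trmxK.
have e1 : \tr (D *m Y *m (Y^T *m D^T)) = \tr (D *m D^T).
  by rewrite -mulmxA (mulmxA Y) hY mul1mx.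
have e2 : \tr (D *m Y *m A^T) = \tr (A *m Y^T *m D^T).
  by rewrite -mxtrace_tr !trmx_mul !trmxK mulmxA.
have e3 : \tr (D *m (Y *m A^T)) = \tr (A *m Y^T *m D^T).
  by rewrite mulmxA e2.
have e4 : \tr (A *m (Y^T *m D^T)) = \tr (A *m Y^T *m D^T) by rewrite mulmxA.
have e5 : \tr (A *m Y^T *m (Y *m A^T)) = \tr (A *m Y^T *m (A *m Y^T)^T).
  by rewrite trmx_mul trmxK.
rewrite e1 e2 e3 e4.
ring.
Qed.

Definition cc k n (Z : 'M[R]_(k,n)) (j : 'I_n) := \sum_i Z i j ^+ 2.

Lemma cc_ge0 k n (Z : 'M[R]_(k,n)) j : 0 <= cc Z j.
Proof. by apply: sumr_ge0 => i _; apply: sqr_ge0. Qed.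

Lemma sum_cc k n (Z : 'M[R]_(k,n)) : Z *m Z^T = 1%:M -> \sum_j cc Z j = k%:R.
Proof.
move=> hZ; rewrite /cc exchange_big /=.
have := frob2_tr Z; rewrite hZ mxtrace1 /frob2 => <-.
done.
Qed.

Lemma cc_le1 k n (Z : 'M[R]_(k,n)) j : Z *m Z^T = 1%:M -> cc Z j <= 1.
Proof.
move=> hZ.
pose w := Z^T *m col j Z.
have h1 : (w^T *m w) 0 0 = cc Z j.
  rewrite /w trmx_mul trmxK mulmxA -(mulmxA _ Z) hZ mulmx1 !mxE /cc.
  by apply: eq_bigr => i _; rewrite !mxE expr2.
have h2 : (w^T *m w) 0 0 = \sum_l (w l 0) ^+ 2.
  by rewrite !mxE; apply: eq_bigr => l _; rewrite !mxE expr2.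
have h3 : w j 0 = cc Z j.
  by rewrite !mxE /cc; apply: eq_bigr => i _; rewrite !mxE expr2.
have h4 : (cc Z j) ^+ 2 <= cc Z j.
  rewrite -{2}h1 h2 (bigD1 j) //= h3 lerDl.
  by apply: sumr_ge0 => l _; apply: sqr_ge0.
have := cc_ge0 Z j; nra.
Qed.

Lemma rearr n (w c : 'I_n -> R) (b : 'I_n -> bool) (t : R) (k : nat) :
  (forall j, 0 <= c j <= 1) -> \sum_j c j = k%:R -> \sum_j (b j)%:R = k%:R :> R ->
  (forall j, b j -> t <= w j) -> (forall j, ~~ b j -> w j <= t) ->
  forall j0, ~~ b j0 ->
  \sum_j w j * c j <= \sum_j w j * (b j)%:R - (t - w j0) * c j0.
Proof.
move=> hc hsc hsb hin hout j0 hj0.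
have key : \sum_j w j * (b j)%:R - \sum_j w j * c j =
   \sum_j (w j - t) * ((b j)%:R - c j).
  have e : \sum_j (w j - t) * ((b j)%:R - c j) =
     \sum_j (w j * (b j)%:R - w j * c j) - t * (\sum_j (b j)%:R - \sum_j c j).
    rewrite -sumrB mulr_sumr -sumrB; apply: eq_bigr => j _; ring.
  by rewrite e hsb hsc subrr mulr0 subr0 sumrB.
have gj : forall j, 0 <= (w j - t) * ((b j)%:R - c j).
  move=> j; have := hc j; case: (boolP (b j)) => hb /andP[c0 c1].
    by apply: mulr_ge0; [rewrite subr_ge0; apply: hin|rewrite subr_ge0].
  by apply: mulr_le0; [rewrite subr_le0; apply: hout| rewrite sub0r oppr_le0].
have : (t - w j0) * c j0 <= \sum_j (w j - t) * ((b j)%:R - c j).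
  rewrite (bigD1 j0) //= (negbTE hj0) -[X in X <= _]addr0 lerD //.
    by rewrite /= mulr0n; lra.
  by apply: sumr_ge0 => j _; apply: gj.
rewrite -key; lra.
Qed.

End Gen.
Section Spec.
Variable R : realType.
Variable N : nat.
Local Notation n := N.+1.
Variable V : 'M[R]_n.
Hypothesis hVV : V^T *m V = 1%:M.
Hypothesis hV1 : row ord0 V = @unit_ones_row R n.
Local Notation u := (@unit_ones_row R n).

Lemma VVt : V *m V^T = 1%:M.
Proof. exact: mulmx1C. Qed.

Lemma sqrtn_neq0 : Num.sqrt (n%:R : R) != 0.
Proof. by rewrite sqrtr_eq0 -ltNge ltr0n. Qed.

Lemma uu : u *m u^T = 1%:M.
Proof.
apply/matrixP => i j; rewrite !ord1 !mxE eqxx /=.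
under eq_bigr => l _ do rewrite !mxE.
rewrite sumr_const card_ord -invfM -expr2 sqr_sqrtr ?ler0n //.
by rewrite -[_ *+ _]mulr_natl mulfV // pnatr_eq0.
Qed.

Lemma feas12E k (Y : 'M[R]_(k, n)) :
  feas12 Y <-> Y *m Y^T = 1%:M /\ Y *m u^T = 0.
Proof.
rewrite /feas12 /stackX tr_col_mx mul_col_row (scalar_mx_block 1 k).
split.
  by move/eq_block_mx => [_ _ H1 H2].
move=> [H1 H2]; rewrite uu H1 H2.
have -> : u *m Y^T = 0 by rewrite -(trmxK u) -trmx_mul H2 trmx0.
by [].
Qed.

Lemma phi_block k (L : 'M[R]_n) (Y : 'M[R]_(k, n)) :
  \tr (stackX Y *m L *m (stackX Y)^T) = \tr (u *m L *m u^T) + \tr (Y *m L *m Y^T).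
Proof. by rewrite /stackX tr_col_mx (mul_col_mx u Y L) mul_col_row mxtrace_block. Qed.

Lemma trL k (d : 'rV[R]_n) (Y : 'M[R]_(k, n)) :
  \tr (Y *m (V^T *m diag_mx d *m V) *m Y^T) = \sum_j d 0 j * cc (Y *m V^T) j.
Proof.
have -> : Y *m (V^T *m diag_mx d *m V) *m Y^T =
    (Y *m V^T) *m diag_mx d *m (Y *m V^T)^T.
  by rewrite trmx_mul trmxK !mulmxA.
move: (Y *m V^T) => Z.
rewrite /mxtrace /cc.
under eq_bigr => i _ do rewrite !mxE.
rewrite exchange_big /=; apply: eq_bigr => j _; rewrite mulr_sumr.
by apply: eq_bigr => i _; rewrite mul_mx_diag !mxE; ring.
Qed.

Lemma frob_diag k (t : 'rV[R]_n) (Y : 'M[R]_(k, n)) :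
  frob2 (diag_mx t *m V *m Y^T) = \sum_j (t 0 j) ^+ 2 * cc (Y *m V^T) j.
Proof.
rewrite /frob2 /cc; apply: eq_bigr => j _; rewrite mulr_sumr.
apply: eq_bigr => i _.
rewrite -mulmxA mul_diag_mx mxE.
have -> : (V *m Y^T) j i = (Y *m V^T) i j.
  by rewrite !mxE; apply: eq_bigr => l _; rewrite !mxE mulrC.
by rewrite exprMn.
Qed.

Lemma Z0E k (Y : 'M[R]_(k, n)) i : (Y *m V^T) i ord0 = (Y *m u^T) i ord0.
Proof. by rewrite -hV1 !mxE; apply: eq_bigr => l _; rewrite !mxE. Qed.

Lemma cc0E k (Y : 'M[R]_(k, n)) : cc (Y *m V^T) ord0 = 0 <-> Y *m u^T = 0.
Proof.
split.
  move=> h; apply/matrixP => i j; rewrite ord1 -Z0E [RHS]mxE.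
  have := @psumr_eq0P _ _ _ _ (fun i _ => sqr_ge0 ((Y *m V^T) i ord0)) h i isT.
  by move/eqP; rewrite sqrf_eq0 => /eqP.
move=> h; rewrite /cc; apply: big1 => i _.
by rewrite Z0E h mxE expr0n.
Qed.

Lemma onesE k (Y : 'M[R]_(k, n)) : Y *m ones R n = 0 <-> Y *m u^T = 0.
Proof.
have -> : ones R n = Num.sqrt (n%:R) *: u^T.
  by apply/matrixP => i j; rewrite !mxE mulfV // sqrtn_neq0.
rewrite -scalemxAr; split => [/eqP|->]; last by rewrite scaler0.
by rewrite scaler_eq0 (negbTE sqrtn_neq0) /= => /eqP.
Qed.

End Spec.
Section Main.
Variable R : realType.
Variable N : nat.
Local Notation n := N.+1.
Variable V : 'M[R]_n.
Variable lam : 'rV[R]_n.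
Hypothesis hVV : V^T *m V = 1%:M.
Hypothesis hV1 : row ord0 V = @unit_ones_row R n.
Hypothesis hlam : forall i j : 'I_n, (i <= j)%N -> lam 0 i <= lam 0 j.
Local Notation u := (@unit_ones_row R n).
Local Notation amax := (lam 0 ord_max).
Local Notation L := (V^T *m diag_mx lam *m V).

Definition s := \row_(i < n) Num.sqrt (amax - lam 0 i).
Definition s' := \row_(i < n) (Num.sqrt (amax - lam 0 i) * (i != ord0)%:R).

Lemma lam_le i : lam 0 i <= amax.
Proof. by apply: hlam; rewrite -ltnS ltn_ord. Qed.

Lemma s2 j : (s 0 j) ^+ 2 = amax - lam 0 j.
Proof. by rewrite mxE sqr_sqrtr // subr_ge0 lam_le. Qed.

Lemma s'2 j : (s' 0 j) ^+ 2 = (j != ord0)%:R * (amax - lam 0 j).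
Proof.
rewrite mxE exprMn sqr_sqrtr ?subr_ge0 ?lam_le //.
by case: (j != ord0); rewrite ?expr1n ?expr0n /= ?mulr1 ?mulr0 ?mul1r ?mul0r.
Qed.

Lemma VuE i : (V *m u^T) i ord0 = (i == ord0)%:R.
Proof.
have := congr1 (fun M : 'M[R]_n => M i ord0) (VVt hVV); rewrite [RHS]mxE => <-.
by rewrite -hV1 !mxE; apply: eq_bigr => l _; rewrite !mxE.
Qed.

Lemma AbE : mean_removed (virtual_data lam V) = diag_mx s' *m V.
Proof.
have E1 : (n%:R : R)^-1 *: (ones R n *m (ones R n)^T) = u^T *m u.
  apply/matrixP => i j; rewrite !mxE !big_ord1 !mxE mulr1 -invfM -expr2.
  by rewrite mulr1 sqr_sqrtr ?ler0n.
have E3 : V *m u^T *m u = \matrix_(i, j) ((i == ord0)%:R * V ord0 j).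
  apply/matrixP => i j; rewrite [LHS]mxE big_ord1 VuE -hV1 !mxE.
  done.
rewrite /mean_removed /virtual_data -/s E1 mulmxBr mulmx1 -!mulmxA (mulmxA V) E3.
rewrite -mulmxBr !mul_diag_mx; apply/matrixP => i j; rewrite !mxE.
have [->|hi] := eqVneq i ord0; rewrite /= ?mul1r ?mul0r ?subrr ?subr0 ?mulr0 ?mulr1 ?mul0r //.
Qed.


Definition phi k (Y : 'M[R]_(k,n)) := \tr (stackX Y *m L *m (stackX Y)^T).
Definition psi k (Y : 'M[R]_(k,n)) := frob2 (diag_mx s' *m V *m Y^T).

Lemma frob20 m p : frob2 (0 : 'M[R]_(m,p)) = 0.
Proof. by rewrite /frob2; apply: big1 => i _; apply: big1 => j _; rewrite mxE expr0n. Qed.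

Lemma orthZ k (Y : 'M[R]_(k,n)) : Y *m Y^T = 1%:M -> (Y *m V^T) *m (Y *m V^T)^T = 1%:M.
Proof. by move=> hY; rewrite trmx_mul trmxK mulmxA -(mulmxA Y) hVV mulmx1. Qed.

Lemma phiE k (Y : 'M[R]_(k,n)) : phi Y = \sum_j lam 0 j * cc (stackX Y *m V^T) j.
Proof. by rewrite /phi trL. Qed.

Lemma frobAt k (Y : 'M[R]_(k,n)) : feas12 Y ->
  frob2 (diag_mx s *m V *m (stackX Y)^T) = amax * (1 + k)%:R - phi Y.
Proof.
move=> hY; rewrite frob_diag phiE.
have hs := sum_cc (orthZ hY).
under eq_bigr do rewrite s2.
rewrite -hs mulr_sumr -sumrB; apply: eq_bigr => j _; ring.
Qed.

Lemma sol_i_ii k (Xt : 'M[R]_(k,n)) : sol_i L Xt <-> sol_ii (virtual_data lam V) Xt.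
Proof.
rewrite /sol_i /sol_ii.
have -> : virtual_data lam V = diag_mx s *m V by [].
set At := diag_mx s *m V.
have key : forall (D : 'M[R]_(n, 1 + k)) (Y : 'M[R]_(k,n)), feas12 Y ->
   frob2 (At - D *m stackX Y) = frob2 At - amax * (1 + k)%:R + phi Y
      + frob2 (D - At *m (stackX Y)^T).
  move=> D Y hY; rewrite (frob2_decomp _ _ hY) /At frobAt //; ring.
split.
  move=> [hf hmin]; split => //; exists (At *m (stackX Xt)^T) => D' Y hY.
  rewrite !key // subrr frob20.
  have := hmin Y hY; have := frob2_ge0 (D' - At *m (stackX Y)^T).
  rewrite /phi; lra.
move=> [hf [D hD]]; split => // Y hY.
have := hD (At *m (stackX Y)^T) Y hY.
rewrite !key // subrr frob20.
have := frob2_ge0 (D - At *m (stackX Xt)^T).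
rewrite /phi; lra.
Qed.

Lemma sol_iii_E k (Xt : 'M[R]_(k,n)) :
  sol_iii (mean_removed (virtual_data lam V)) Xt <->
  Xt *m Xt^T = 1%:M /\ forall Y : 'M[R]_(k,n), Y *m Y^T = 1%:M -> psi Y <= psi Xt.
Proof.
rewrite /sol_iii AbE.
set Ab := diag_mx s' *m V.
have key : forall (D : 'M[R]_(n, k)) (Y : 'M[R]_(k,n)), Y *m Y^T = 1%:M ->
   frob2 (Ab - D *m Y) = frob2 Ab - psi Y + frob2 (D - Ab *m Y^T).
  by move=> D Y hY; rewrite (frob2_decomp _ _ hY).
split.
  move=> [hf [D hD]]; split => // Y hY.
  have := hD (Ab *m Y^T) Y hY.
  rewrite !key // subrr frob20.
  have := frob2_ge0 (D - Ab *m Xt^T); lra.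
move=> [hf hmax]; split => //; exists (Ab *m Xt^T) => D' Y hY.
rewrite !key // subrr frob20.
have := hmax Y hY; have := frob2_ge0 (D' - Ab *m Y^T); lra.
Qed.

Lemma psiE k (Y : 'M[R]_(k,n)) :
  psi Y = \sum_j (j != ord0)%:R * (amax - lam 0 j) * cc (Y *m V^T) j.
Proof. by rewrite /psi frob_diag; under eq_bigr do rewrite s'2. Qed.

Lemma phi_psi k (Y : 'M[R]_(k,n)) : Y *m Y^T = 1%:M -> Y *m u^T = 0 ->
  phi Y = \tr (u *m L *m u^T) + amax * k%:R - psi Y.
Proof.
move=> hY hu; rewrite /phi phi_block [\tr (Y *m _ *m _)]trL psiE.
have hs := sum_cc (orthZ hY).
have h0 : cc (Y *m V^T) ord0 = 0 by apply/(cc0E hV1).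
suff H : \sum_j lam 0 j * cc (Y *m V^T) j +
         \sum_j (j != ord0)%:R * (amax - lam 0 j) * cc (Y *m V^T) j =
         amax * k%:R by lra.
rewrite -hs mulr_sumr -big_split; apply: eq_bigr => j _.
have [->|hj] := eqVneq j ord0; first by rewrite h0 ?eqxx /=; ring.
by rewrite /= mul1r -mulrDl addrC subrK.
Qed.

Section Rows.
Variable r : nat.
Hypothesis hr2 : (2 <= r)%N.
Hypothesis hrn : (r <= N.+1)%N.
Local Notation k := r.-1.
Local Notation Y0 := (rows_2_to_r r V).

Lemma inordE (i : 'I_k) (j : 'I_n) : (inord i.+1 == j :> 'I_n) = (i.+1 == j)%N.
Proof.
rewrite -val_eqE /= inordK //; have := ltn_ord i; lia.
Qed.

Lemma rowsZ i j : (Y0 *m V^T) i j = (i.+1 == j)%N%:R.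
Proof.
have := congr1 (fun M : 'M[R]_n => M (inord i.+1) j) (VVt hVV).
rewrite [RHS]mxE inordE => <-; rewrite !mxE; apply: eq_bigr => l _; rewrite !mxE.
done.
Qed.

Lemma rows_orth : Y0 *m Y0^T = 1%:M.
Proof.
apply/matrixP => i i'.
have h := congr1 (fun M : 'M[R]_n => M (inord i.+1) (inord i'.+1)) (VVt hVV).
rewrite /= [X in _ = X]mxE inordE inordK in h; last by have := ltn_ord i'; lia.
rewrite eqSS in h.
rewrite [RHS]mxE -h !mxE; apply: eq_bigr => l _; rewrite !mxE.
done.
Qed.

Definition bb (j : 'I_n) := ((0 < j) && (j <= k))%N.

Lemma rows_cc j : cc (Y0 *m V^T) j = (bb j)%:R.
Proof.
rewrite /cc; under eq_bigr do rewrite rowsZ.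
rewrite /bb; case: (boolP ((0 < j) && (j <= k))%N) => hb.
  have hj : (j.-1 < k)%N by lia.
  rewrite (bigD1 (Ordinal hj)) //= big1 ?addr0.
    have -> : (j.-1.+1 == j)%N by apply/eqP; lia.
    by rewrite expr1n.
  move=> i hi; have -> : (i.+1 == j)%N = false.
    apply/negbTE; apply: contra hi => /eqP hi; apply/eqP; apply: val_inj => /=; lia.
  by rewrite expr0n.
apply: big1 => i _; have -> : (i.+1 == j)%N = false.
  by apply/negbTE; apply: contra hb => /eqP <-; have := ltn_ord i; lia.
by rewrite expr0n.
Qed.

Lemma rows_u : Y0 *m u^T = 0.
Proof. by apply/(cc0E hV1); rewrite rows_cc. Qed.

Lemma psi_bound (Y : 'M[R]_(k,n)) : Y *m Y^T = 1%:M ->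
  psi Y <= psi Y0 - (amax - lam 0 (inord k)) * cc (Y *m V^T) ord0.
Proof.
move=> hY.
have hkn : (k < n)%N by lia.
rewrite !psiE.
under [X in _ <= X - _]eq_bigr do rewrite rows_cc.
have := rearr (w := fun j => (j != ord0)%:R * (amax - lam 0 j))
   (c := cc (Y *m V^T)) (b := bb) (t := amax - lam 0 (inord k)) (k := k).
move=> /(_ _ _ _ _ _ ord0 isT) /=.
rewrite mul0r subr0.
apply.
- by move=> j; rewrite cc_ge0 cc_le1 //; apply: orthZ.
- exact: sum_cc (orthZ hY).
- rewrite -(sum_cc (orthZ rows_orth)); apply: eq_bigr => j _; by rewrite rows_cc.
- move=> j; rewrite /bb => /andP [h1 h2].
  have -> : (j != ord0) by rewrite -val_eqE /=; lia.
  rewrite mul1r lerD2l lerN2; apply: hlam; rewrite inordK //.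
- move=> j; rewrite /bb negb_and -!ltnNge.
  have [->|hj] := eqVneq j ord0.
    by rewrite mul0r subr_ge0 lam_le.
  move=> /= /orP [h|h]; rewrite mul1r lerD2l lerN2; apply: hlam; rewrite inordK //.
    by move: hj; rewrite -val_eqE /=; lia.
  by lia.
Qed.


Local Notation Ab := (mean_removed (virtual_data lam V)).

Lemma claim2 (Xt : 'M[R]_(k,n)) : sol_i L Xt <-> sol_iii Ab Xt /\ Xt *m ones R n = 0.
Proof.
split.
- case=> /feas12E [ho hu] hmin; split; last by apply/onesE.
  apply/sol_iii_E; split => // Y hY.
  have h1 := psi_bound hY.
  have h2 : 0 <= (amax - lam 0 (inord k)) * cc (Y *m V^T) ord0.
    by rewrite mulr_ge0 ?cc_ge0 // subr_ge0 lam_le.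
  have h3 := hmin Y0 (proj2 (feas12E _) (conj rows_orth rows_u)).
  change (is_true (phi Xt <= phi Y0)) in h3.
  rewrite (phi_psi ho hu) (phi_psi rows_orth rows_u) in h3.
  lra.
- case=> /sol_iii_E [ho hmax] /onesE hu; split; first by apply/feas12E.
  move=> Y /feas12E [hY hYu].
  change (is_true (phi Xt <= phi Y)); rewrite (phi_psi ho hu) (phi_psi hY hYu).
  have := hmax Y hY; lra.
Qed.

Lemma claim3 : lam 0 (inord k) < amax ->
  forall Xt : 'M[R]_(k,n), sol_i L Xt <-> sol_iii Ab Xt.
Proof.
move=> hlt Xt; split; first by case/claim2.
move=> h3; apply/claim2; split => //; apply/onesE; apply/(cc0E hV1).
case/sol_iii_E: h3 => ho hmax.
have h1 := psi_bound ho.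
have h2 := hmax Y0 rows_orth.
have hc := cc_ge0 (Xt *m V^T) ord0.
have : (amax - lam 0 (inord k)) * cc (Xt *m V^T) ord0 <= 0 by lra.
rewrite pmulr_rle0 ?subr_gt0 // => hc'.
by apply/eqP; rewrite eq_le hc' hc.
Qed.

Lemma claim4 : sol_i L Y0 /\ sol_ii (virtual_data lam V) Y0 /\ sol_iii Ab Y0.
Proof.
have h3 : sol_iii Ab Y0.
  apply/sol_iii_E; split; first exact: rows_orth.
  move=> Y hY; have h1 := psi_bound hY.
  have h2 : 0 <= (amax - lam 0 (inord k)) * cc (Y *m V^T) ord0.
    by rewrite mulr_ge0 ?cc_ge0 // subr_ge0 lam_le.
  lra.
have h1 : sol_i L Y0 by apply/claim2; split => //; apply/onesE; exact: rows_u.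
by split => //; split => //; apply/sol_i_ii.
Qed.

End Rows.

End Main.

Unset Implicit Arguments.

(* The paper's dimension n is written N.+1 here (N.+1 >= r >= 2). *)
Theorem proposition3 (R : realType) (N r : nat)
    (W : 'M[R]_N.+1) (V : 'M[R]_N.+1) (lam : 'rV[R]_N.+1)
    (hWsym : W^T = W) (hWnn : forall i j, 0 <= W i j)
    (hVorth : orthogonal_mx V)
    (hlam : forall i j : 'I_N.+1, (i <= j)%N -> lam 0 i <= lam 0 j)
    (hdec : laplacian W = V^T *m diag_mx lam *m V)
    (hV1 : row ord0 V = @unit_ones_row R N.+1)
    (hr2 : (2 <= r)%N) (hrn : (r <= N.+1)%N) :
  let L := laplacian W in
  let At := virtual_data lam V in
  let Ab := mean_removed At in
  (forall Xt : 'M[R]_(r.-1, N.+1), sol_i L Xt <-> sol_ii At Xt) /\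
  (forall Xt : 'M[R]_(r.-1, N.+1),
      sol_i L Xt <-> (sol_iii Ab Xt /\ Xt *m @ones R N.+1 = 0)) /\
  (lam 0 (inord r.-1) < lam 0 ord_max ->
      forall Xt : 'M[R]_(r.-1, N.+1), sol_i L Xt <-> sol_iii Ab Xt) /\
  sol_i L (rows_2_to_r r V) /\ sol_ii At (rows_2_to_r r V) /\
  sol_iii Ab (rows_2_to_r r V).
Proof.
move=> L At Ab.
rewrite /Ab /At /L hdec.
split; first by move=> Xt; apply: (sol_i_ii hVorth hlam).
split; first by move=> Xt; apply: (claim2 hVorth hV1 hlam hr2 hrn).
split; first by apply: (claim3 hVorth hV1 hlam hr2 hrn).
exact: (claim4 hVorth hV1 hlam hr2 hrn).
Qed.
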